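(* Let $t$ be an $\mathrm{SL}_2$-tiling, and let $i<j$ and $p<q$ be integers. Then $t_{ip}t_{jq}-t_{iq}t_{jp}=c_{ij}d_{pq}$. In particular this determinant is a positive integer.
   Context: An $\mathrm{SL}_2$-tiling is a map $t:\mathbb{Z}\times\mathbb{Z}\to\{1,2,3,\dots\}$, $(i,j)\mapsto t_{ij}$, with $t_{ij}t_{i+1,j+1}-t_{i,j+1}t_{i+1,j}=1$ for all $i,j$. For integers $i<j$ and any integer $a$ put $c_{ij}=t_{ia}t_{j,a+1}-t_{i,a+1}t_{ja}$ and $d_{ij}=t_{ai}t_{a+1,j}-t_{aj}t_{a+1,i}$; these values do not depend on the choice of $a$ (a known fact about $\mathrm{SL}_2$-tilings). *)

(* Defs.v *)
From Stdlib Require Import ZArith.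
Open Scope Z_scope.

Definition is_SL2_tiling (t : Z -> Z -> Z) : Prop :=
  (forall i j, 1 <= t i j) /\
  (forall i j, t i j * t (i+1) (j+1) - t i (j+1) * t (i+1) j = 1).

(* c_{ij} computed using column a, d_{ij} computed using row a.
   (The paper notes these do not depend on a.) *)
Definition c_at (t : Z -> Z -> Z) (i j a : Z) : Z :=
  t i a * t j (a+1) - t i (a+1) * t j a.

Definition d_at (t : Z -> Z -> Z) (i j a : Z) : Z :=
  t a i * t (a+1) j - t a j * t (a+1) i.

(* Main.v *)
Require Import Defs.
From Stdlib Require Import ZArith Lia.
Open Scope Z_scope.

Lemma pos_mono (f g : Z -> Z) (hf : forall x, 0 < f x) (hg : forall x, 0 < g x)
  (h : forall x, f x * g (x+1) - f (x+1) * g x = 1) :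
  forall p q, p < q -> 0 < f p * g q - f q * g p.
Proof.
  intros p q hpq.
  assert (forall n : nat, 0 < f p * g (p + Z.of_nat (S n)) - f (p + Z.of_nat (S n)) * g p).
  { induction n.
    - simpl. specialize (h p). lia.
    - set (y := p + Z.of_nat (S n)) in *.
      replace (p + Z.of_nat (S (S n))) with (y + 1) by (unfold y; lia).
      specialize (h y). pose proof (hf y). pose proof (hg y).
      pose proof (hf p). pose proof (hg p). pose proof (hf (y+1)). pose proof (hg (y+1)).
      set (a1 := f p) in *. set (b1 := g p) in *. set (a2 := f y) in *. set (b2 := g y) in *.
      set (a3 := f (y+1)) in *. set (b3 := g (y+1)) in *.
      assert (a1 * b3 * (a2 * b2) > a3 * b1 * (a2 * b2)) by nia.
      nia. }
  specialize (H (Z.to_nat (q - p - 1))).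
  replace (p + Z.of_nat (S (Z.to_nat (q - p - 1)))) with q in H by lia. exact H.
Qed.

Section S.
Variable t : Z -> Z -> Z.
Hypothesis ht : is_SL2_tiling t.

Let U r x := t r x + t r (x+2).
Let T r x := t r (x+1).

Lemma tpos : forall i j, 0 < t i j.
Proof. intros; destruct ht as [h _]; specialize (h i j); lia. Qed.

Lemma rec_adj : forall r x, U r x * T (r+1) x = U (r+1) x * T r x.
Proof.
  intros r x. unfold U, T. destruct ht as [_ h].
  pose proof (h r x). pose proof (h r (x+1)).
  replace (x+1+1) with (x+2) in * by lia. nia.
Qed.

Lemma rec_trans : forall x r s w, U r x * T s x = U s x * T r x ->
  U s x * T w x = U w x * T s x -> U r x * T w x = U w x * T r x.
Proof.
  intros x r s w H1 H2. pose proof (tpos s (x+1)). unfold T in *.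
  apply (Z.mul_reg_r _ _ (t s (x+1))); [lia|].
  transitivity (U s x * t r (x+1) * t w (x+1)). { rewrite <- H1. ring. }
  transitivity (t r (x+1) * (U s x * t w (x+1))). ring.
  rewrite H2. ring.
Qed.

Lemma rec_all : forall x r s, U r x * T s x = U s x * T r x.
Proof.
  intros x.
  assert (Hup : forall r (n : nat), U r x * T (r + Z.of_nat n) x = U (r + Z.of_nat n) x * T r x).
  { intros r n. induction n.
    - simpl. rewrite Z.add_0_r. ring.
    - apply rec_trans with (s := r + Z.of_nat n); auto.
      replace (r + Z.of_nat (S n)) with (r + Z.of_nat n + 1) by lia. apply rec_adj. }
  intros r s. destruct (Z_le_gt_dec r s).
  - specialize (Hup r (Z.to_nat (s - r))). replace (r + Z.of_nat (Z.to_nat (s - r))) with s in Hup by lia. exact Hup.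
  - specialize (Hup s (Z.to_nat (r - s))). replace (s + Z.of_nat (Z.to_nat (r - s))) with r in Hup by lia. lia.
Qed.

Definition al b i := t i 0 * t (b+1) 1 - t i 1 * t (b+1) 0.
Definition be b i := t b 0 * t i 1 - t b 1 * t i 0.

Definition Pp b i x := t i x = al b i * t b x + be b i * t (b+1) x.

Lemma step : forall b i x, Pp b i (x+1) -> (Pp b i x <-> Pp b i (x+2)).
Proof.
  intros b i x H1.
  assert (KU : U i x = al b i * U b x + be b i * U (b+1) x).
  { pose proof (tpos b (x+1)).
    apply (Z.mul_reg_r _ _ (t b (x+1))); [lia|].
    pose proof (rec_all x i b) as E1. pose proof (rec_all x (b+1) b) as E2.
    unfold T in *. unfold Pp in H1.
    rewrite E1, H1.
    transitivity (al b i * U b x * t b (x+1) + be b i * (U (b+1) x * t b (x+1))); [|ring].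
    rewrite E2. ring. }
  unfold U, Pp in *. split; intro; lia.
Qed.

Lemma span : forall b i x, Pp b i x.
Proof.
  intros b i.
  destruct ht as [_ h]. pose proof (h b 0) as h0. simpl in h0.
  assert (K : forall z, z * (t b 0 * t (b + 1) 1 - t b 1 * t (b + 1) 0) = z)
    by (intro; rewrite h0; ring).
  assert (Q : forall x, Pp b i x /\ Pp b i (x+1)).
  { intro x. induction x using Z.peano_ind.
    - unfold Pp, al, be; simpl. split.
      + rewrite <- (K (t i 0)) at 1. ring.
      + rewrite <- (K (t i 1)) at 1. ring.
    - destruct IHx as [A B]. split. now replace (Z.succ x) with (x+1) by lia.
      pose proof (step b i x B). replace (Z.succ x + 1) with (x+2) by lia. tauto.
    - destruct IHx as [A B]. replace (Z.pred x + 1) with x by lia. split; auto.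
      pose proof (step b i (Z.pred x)). replace (Z.pred x + 1) with x in H by lia.
      replace (Z.pred x + 2) with (x+1) in H by lia. tauto. }
  intro x; apply Q.
Qed.

End S.

Theorem proposition5p7 (t : Z -> Z -> Z) (ht : is_SL2_tiling t)
  (i j p q : Z) (hij : i < j) (hpq : p < q) (a b : Z) :
  t i p * t j q - t i q * t j p = c_at t i j a * d_at t p q b /\
  0 < t i p * t j q - t i q * t j p.
Proof.
  assert (Heq : t i p * t j q - t i q * t j p = c_at t i j a * d_at t p q b).
  { unfold c_at, d_at.
    pose proof (span t ht b i p) as X1. pose proof (span t ht b i q) as X2.
    pose proof (span t ht b j p) as X3. pose proof (span t ht b j q) as X4.
    pose proof (span t ht b i a) as Y1. pose proof (span t ht b i (a+1)) as Y2.
    pose proof (span t ht b j a) as Y3. pose proof (span t ht b j (a+1)) as Y4.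
    unfold Pp in *. rewrite X1, X2, X3, X4, Y1, Y2, Y3, Y4.
    destruct ht as [_ h]. pose proof (h b a) as hb.
    set (A := t b a * t (b + 1) (a + 1) - t b (a + 1) * t (b + 1) a) in *.
    transitivity ((al t b i * be t b j - be t b i * al t b j) * A *
      (t b p * t (b + 1) q - t b q * t (b + 1) p)).
    - rewrite hb; ring.
    - unfold A; ring. }
  split; [exact Heq|]. rewrite Heq.
  apply Z.mul_pos_pos.
  - unfold c_at.
    assert (P := pos_mono (fun x => t x a) (fun x => t x (a+1))
      (fun x => tpos t ht x a) (fun x => tpos t ht x (a+1))).
    simpl in P. destruct ht as [_ h]. specialize (P (fun x => ltac:(pose proof (h x a); lia)) i j hij). lia.
  - unfold d_at.
    assert (P := pos_mono (fun x => t b x) (fun x => t (b+1) x)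
      (fun x => tpos t ht b x) (fun x => tpos t ht (b+1) x)).
    simpl in P. destruct ht as [_ h]. specialize (P (fun x => h b x) p q hpq). lia.
Qed.
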